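(* Let $(\mathcal{E},\mathcal{L},\mathcal{B})$ be a normal labelled space and $R$ a unital commutative ring. In $L_R(\mathcal{E},\mathcal{L},\mathcal{B})$: (i) if $A\in\mathcal{B}$ is non-empty then $p_A\neq 0$; (ii) if $r\in R$, $A\in\mathcal{B}$ and $rp_A=0$, then $r=0$ or $A=\emptyset$; (iii) if $A_1,\dots,A_n\in\mathcal{B}$ are non-empty and pairwise disjoint, $r_1,\dots,r_n\in R$ and $\sum_i r_ip_{A_i}=0$, then $r_i=0$ for all $i$; (iv) if $\alpha,\beta\in\mathcal{L}^*(\mathcal{E})$, $A\in\mathcal{B}$ with $A\cap r(\alpha)\cap r(\beta)\neq\emptyset$, and $0\neq r\in R$, then $rs_\alpha p_A s_\beta^*\neq 0$.
   Context: A graph $\mathcal{E}=(\mathcal{E}^0,\mathcal{E}^1,r,s)$ consists of a set of vertices $\mathcal{E}^0$, a set of edges $\mathcal{E}^1$ and maps $r,s:\mathcal{E}^1\to\mathcal{E}^0$. A finite path is a sequence $\lambda=\lambda_1\cdots\lambda_n$ of edges with $r(\lambda_i)=s(\lambda_{i+1})$, with $s(\lambda)=s(\lambda_1)$, $r(\lambda)=r(\lambda_n)$. A labelled graph $(\mathcal{E},\mathcal{L})$ is a graph with a surjective map $\mathcal{L}:\mathcal{E}^1\to\mathcal{A}$ onto a set $\mathcal{A}$ (the alphabet), extended to paths by $\mathcal{L}(\lambda)=\mathcal{L}(\lambda_1)\cdots\mathcal{L}(\lambda_n)$. $\mathcal{L}^*(\mathcal{E})$ denotes the set of words $\mathcal{L}(\lambda)$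 for finite paths $\lambda$ of positive length, together with the empty word $\omega$; $|\alpha|$ is the length of a word. For $A\subseteq\mathcal{E}^0$ and $\alpha\in\mathcal{L}^*(\mathcal{E})$, $r(A,\alpha)=\{r(\lambda)\mid \mathcal{L}(\lambda)=\alpha,\ s(\lambda)\in A\}$ if $\alpha\neq\omega$ and $r(A,\omega)=A$; $r(\alpha)=r(\mathcal{E}^0,\alpha)$; $\mathcal{L}(A\mathcal{E}^1)=\{a\in\mathcal{A}\mid r(A,a)\neq\emptyset\}$. A labelled space $(\mathcal{E},\mathcal{L},\mathcal{B})$ is a labelled graph with a family $\mathcal{B}$ of subsets of $\mathcal{E}^0$ closed under finite intersections and finite unions, containing $r(\alpha)$ for all non-empty $\alpha\in\mathcal{L}^*(\mathcal{E})$, and with $r(A,\alpha)\in\mathcal{B}$ for all $A\in\mathcal{B}$, $\alpha\in\mathcal{L}^*(\mathcal{E})$. It is normal if additionally $r(A\cap B,\alpha)=r(A,\alpha)\cap r(B,\alpha)$ for all $A,B\in\mathcal{B}$ and non-empty $\alpha$, and $\mathcal{B}$ is closed under relative complements. A non-empty $A\in\mathcal{B}$ is regular if $0<|\mathcal{L}(B\mathcal{E}^1)|<\infty$ for every non-empty $B\in\mathcal{B}$ with $B\subseteq A$; $\mathcal{B}_{reg}$ is the set of regular sets together with $\emptyset$. For $\alpha\in\mathcal{L}^*(\mathcal{E})$, $\mathcal{B}_\alpha=\{A\in\mathcal{B}\mid A\subseteq r(\alpha)\}$. The Leavitt labelled path algebra $L_R(\mathcal{E},\mathcal{L},\mathcal{B})$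 (for a normal labelled space and a unital commutative ring $R$) is the universal $R$-algebra generated by $\{p_A\mid A\in\mathcal{B}\}\cup\{s_a,s_a^*\mid a\in\mathcal{A}\}$ subject to: (i) $p_{A\cap B}=p_Ap_B$, $p_{A\cup B}=p_A+p_B-p_{A\cap B}$, $p_\emptyset=0$; (ii) $p_As_a=s_ap_{r(A,a)}$ and $s_a^*p_A=p_{r(A,a)}s_a^*$; (iii) $s_a^*s_a=p_{r(a)}$ and $s_b^*s_a=0$ for $b\neq a$; (iv) $s_as_a^*s_a=s_a$, $s_a^*s_as_a^*=s_a^*$; (v) $p_A=\sum_{a\in\mathcal{L}(A\mathcal{E}^1)}s_ap_{r(A,a)}s_a^*$ for every $A\in\mathcal{B}_{reg}$. For $\alpha=a_1\cdots a_n$ put $s_\alpha=s_{a_1}\cdots s_{a_n}$, $s_\alpha^*=s_{a_n}^*\cdots s_{a_1}^*$, and by convention $s_\omega p_A s_\omega^*=p_A$, $s_\omega p_A s_\beta^*=p_As_\beta^*$, etc. *)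

(* Defs.v *)
From HB Require Import structures.
From mathcomp Require Import all_boot all_algebra.
From mathcomp Require Import boolp classical_sets cardinality.
From Stdlib Require List.
Set Implicit Arguments. Unset Strict Implicit. Unset Printing Implicit Defensive.
Import GRing.Theory.
Local Open Scope classical_set_scope.
Local Open Scope ring_scope.

(* Graph E = (E^0 = V, E^1 = Ed, rng, src) with labels lab : Ed -> Alph. *)
Section LabelledSpaces.
Variables (V Ed Alph : Type) (src rng : Ed -> V) (lab : Ed -> Alph).

Fixpoint linked (e : Ed) (l : seq Ed) : Prop :=
  match l with
  | [::] => True
  | e' :: l' => rng e = src e' /\ linked e' l'
  end.

(* a finite path of positive length: e0 :: l *)
Definition is_path (e0 : Ed) (l : seq Ed) : Prop := linked e0 l.

Definition in_Lstar (w : seq Alph) : Prop :=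
  w = [::] \/ exists e0 l, is_path e0 l /\ map lab (e0 :: l) = w.

Definition rset (A : set V) (w : seq Alph) : set V :=
  match w with
  | [::] => A
  | _ :: _ => [set v | exists e0 l, is_path e0 l /\ map lab (e0 :: l) = w
                        /\ A (src e0) /\ rng (last e0 l) = v]
  end.

Definition rword (w : seq Alph) : set V := rset setT w.

Definition out_labels (A : set V) : set Alph := [set a | rset A [:: a] != set0].

Definition labelled_space (B : set (set V)) : Prop :=
  [/\ (forall A C, B A -> B C -> B (A `&` C)),
      (forall A C, B A -> B C -> B (A `|` C)),
      (forall w, in_Lstar w -> w <> [::] -> B (rword w))
    & (forall A w, B A -> in_Lstar w -> B (rset A w))].

Definition normal_labelled_space (B : set (set V)) : Prop :=
  [/\ labelled_space B,
      (forall A C w, B A -> B C -> in_Lstar w -> w <> [::] ->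
          rset (A `&` C) w = rset A w `&` rset C w)
    & (forall A C, B A -> B C -> B (A `\` C))].

Definition regular (B : set (set V)) (A : set V) : Prop :=
  [/\ B A, A != set0 &
      forall C, B C -> C != set0 -> C `<=` A ->
        out_labels C != set0 /\ finite_set (out_labels C)].

Definition in_Breg (B : set (set V)) (A : set V) : Prop :=
  regular B A \/ A = set0.

Section Rep.
Variables (R : comNzRingType) (B : set (set V)).

Definition LLPA_rep (X : algType R) (p : set V -> X) (s ss : Alph -> X) : Prop :=
  [/\ (forall A C, B A -> B C ->
         p (A `&` C) = p A * p C /\ p (A `|` C) = p A + p C - p (A `&` C)),
      p set0 = 0 /\
      (forall A a, B A ->
         p A * s a = s a * p (rset A [:: a]) /\ ss a * p A = p (rset A [:: a]) * ss a),
      (forall a b, ss a * s a = p (rword [:: a]) /\ (b <> a -> ss b * s a = 0)),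
      (forall a, s a * ss a * s a = s a /\ ss a * s a * ss a = ss a)
    & (forall A, in_Breg B A -> forall l : seq Alph, List.NoDup l ->
         (forall a, List.In a l <-> out_labels A a) ->
         p A = \sum_(a <- l) s a * p (rset A [:: a]) * ss a)].

(* An element of L_R(E,L,B), given as a (noncommutative) R-algebra expression
   in the generators p_A, s_a, s_a^*; it is zero in the universal algebra
   L_R(E,L,B) iff it vanishes under every family satisfying the relations. *)
Definition LLPA_expr :=
  forall X : algType R, (set V -> X) -> (Alph -> X) -> (Alph -> X) -> X.

Definition LLPA_eq0 (x : LLPA_expr) : Prop :=
  forall (X : algType R) (p : set V -> X) (s ss : Alph -> X),
    LLPA_rep p s ss -> x X p s ss = 0.

End Rep.

(* s_alpha and s_beta^* (with s_omega = 1, so s_omega p_A s_beta^* = p_A s_beta^* ) *)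
Definition s_word (R : pzRingType) (s : Alph -> R) (w : seq Alph) : R :=
  \prod_(a <- w) s a.
Definition s_word_star (R : pzRingType) (ss : Alph -> R) (w : seq Alph) : R :=
  \prod_(a <- rev w) ss a.

End LabelledSpaces.

(* Main.v *)
Require Import Defs.
From HB Require Import structures.
From mathcomp Require Import all_boot all_algebra.
From mathcomp Require Import boolp classical_sets cardinality.
From mathcomp Require Import filter zify.
Set Implicit Arguments. Unset Strict Implicit. Unset Printing Implicit Defensive.
Import GRing.Theory.

Section EndAlg.
Local Open Scope ring_scope.
Variables (R : comNzRingType) (T : Type).

Definition islin (F : (T -> R) -> (T -> R)) :=
  forall k f g, F (fun x => k * f x + g x) = (fun x => k * F f x + F g x).

Record lendt (t0 : T) := Lend { ap :> (T -> R) -> (T -> R); apL : islin ap }.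
Variable t0 : T.
Local Notation lend := (lendt t0).

Lemma lend_eq (F G : lend) : (forall f x, F f x = G f x) -> F = G.
Proof.
case: F G => [F FL] [G GL] /= H.
have E : F = G by apply: funext => f; apply: funext => x; exact: H.
subst G; congr Lend; exact: Prop_irrelevance.
Qed.

HB.instance Definition _ := gen_eqMixin lend.
HB.instance Definition _ := gen_choiceMixin lend.

Lemma apD (F : lend) f g : F (fun x => f x + g x) = (fun x => F f x + F g x).
Proof.
have E := apL F 1 f g.
have E2 : (fun x => 1 * f x + g x) = (fun x => f x + g x).
  by apply: funext => x; rewrite mul1r.
rewrite E2 in E; rewrite E; apply: funext => x; by rewrite mul1r.
Qed.

Lemma ap0 (F : lend) : F (fun _ => 0) = (fun _ => 0).
Proof.
have E := apD F (fun _ => 0) (fun _ => 0).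
have E2 : (fun x : T => (0:R) + 0) = (fun _ => 0) by apply: funext => x; rewrite addr0.
rewrite E2 in E; apply: funext => x.
have H := congr1 (fun h => h x) E; simpl in H.
apply: (@addrI _ (F (fun _ => 0) x)); rewrite addr0; exact: esym H.
Qed.

Lemma apZ (F : lend) k f : F (fun x => k * f x) = (fun x => k * F f x).
Proof.
have E := apL F k f (fun _ => 0).
have E2 : (fun x => k * f x + (fun _ => (0:R)) x) = (fun x => k * f x).
  by apply: funext => x; rewrite addr0.
rewrite E2 ap0 in E; rewrite E; apply: funext => x; by rewrite addr0.
Qed.

Lemma ap_ext (F : lend) f g : (forall x, f x = g x) -> F f = F g.
Proof. by move=> H; congr (ap F); apply: funext. Qed.

Definition lzero_fun (f : T -> R) := fun _ : T => (0:R).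
Lemma lzero_lin : islin lzero_fun.
Proof. by move=> k f g; apply: funext => x; rewrite /lzero_fun mulr0 addr0. Qed.
Definition lzero := Lend t0 lzero_lin.

Definition ladd_fun (F G : lend) f := fun x => F f x + G f x.
Lemma ladd_lin F G : islin (ladd_fun F G).
Proof.
move=> k f g; apply: funext => x; rewrite /ladd_fun !apL /=.
by rewrite mulrDr addrACA.
Qed.
Definition ladd F G := Lend t0 (ladd_lin F G).

Definition lopp_fun (F : lend) f := fun x => - F f x.
Lemma lopp_lin F : islin (lopp_fun F).
Proof. by move=> k f g; apply: funext => x; rewrite /lopp_fun apL /= opprD mulrN. Qed.
Definition lopp F := Lend t0 (lopp_lin F).

Lemma laddA : associative ladd.
Proof. by move=> F G H; apply: lend_eq => f x /=; rewrite /ladd_fun addrA. Qed.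
Lemma laddC : commutative ladd.
Proof. by move=> F G; apply: lend_eq => f x /=; rewrite /ladd_fun addrC. Qed.
Lemma ladd0 : left_id lzero ladd.
Proof. by move=> F; apply: lend_eq => f x /=; rewrite /ladd_fun /lzero_fun add0r. Qed.
Lemma laddN : left_inverse lzero lopp ladd.
Proof. by move=> F; apply: lend_eq => f x /=; rewrite /ladd_fun /lopp_fun /lzero_fun addNr. Qed.

HB.instance Definition _ := GRing.isZmodule.Build lend laddA laddC ladd0 laddN.

Definition lone_fun (f : T -> R) := f.
Lemma lone_lin : islin lone_fun. Proof. by []. Qed.
Definition lone := Lend t0 lone_lin.

Definition lmul_fun (F G : lend) f := F (G f).
Lemma lmul_lin F G : islin (lmul_fun F G).
Proof. by move=> k f g; rewrite /lmul_fun apL apL. Qed.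
Definition lmul F G := Lend t0 (lmul_lin F G).

Lemma lmulA : associative lmul.
Proof. by move=> F G H; apply: lend_eq => f x. Qed.
Lemma lmul1 : left_id lone lmul.
Proof. by move=> F; apply: lend_eq => f x. Qed.
Lemma lmulr1 : right_id lone lmul.
Proof. by move=> F; apply: lend_eq => f x. Qed.
Lemma lmulDl : left_distributive lmul +%R.
Proof. by move=> F G H; apply: lend_eq => f x. Qed.
Lemma lmulDr : right_distributive lmul +%R.
Proof. by move=> F G H; apply: lend_eq => f x /=; rewrite /lmul_fun /= /ladd_fun apD. Qed.
Lemma lone_neq0 : lone != 0.
Proof.
apply/eqP => /(congr1 (fun F : lend => F (fun _ => 1) t0)) /=.
rewrite /lone_fun /lzero_fun => /eqP; by rewrite oner_eq0.
Qed.

HB.instance Definition _ := GRing.Zmodule_isNzRing.Build lend lmulA lmul1 lmulr1 lmulDl lmulDr lone_neq0.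

Definition lscale_fun (k : R) (F : lend) f := fun x => k * F f x.
Lemma lscale_lin k F : islin (lscale_fun k F).
Proof.
move=> c f g; apply: funext => x; rewrite /lscale_fun apL /=.
by rewrite mulrDr mulrCA.
Qed.
Definition lscale k F := Lend t0 (lscale_lin k F).

Lemma lscaleA a b F : lscale a (lscale b F) = lscale (a * b) F.
Proof. by apply: lend_eq => f x /=; rewrite /lscale_fun mulrA. Qed.
Lemma lscale1 : left_id 1 lscale.
Proof. by move=> F; apply: lend_eq => f x /=; rewrite /lscale_fun mul1r. Qed.
Lemma lscaleDr : right_distributive lscale +%R.
Proof. by move=> a F G; apply: lend_eq => f x /=; rewrite /lscale_fun /ladd_fun mulrDr. Qed.
Lemma lscaleDl F : {morph lscale^~ F : a b / a + b}.
Proof. by move=> a b; apply: lend_eq => f x /=; rewrite /lscale_fun /ladd_fun mulrDl. Qed.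

HB.instance Definition _ := GRing.Zmodule_isLmodule.Build R lend lscaleA lscale1 lscaleDr lscaleDl.

Lemma lscaleAl (a : R) (F G : lend) : a *: (F * G) = (a *: F) * G.
Proof. by apply: lend_eq => f x. Qed.
HB.instance Definition _ := GRing.Lmodule_isLalgebra.Build R lend lscaleAl.
Lemma lscaleAr (a : R) (F G : lend) : a *: (F * G) = F * (a *: G).
Proof. by apply: lend_eq => f x /=; rewrite /lscale_fun /lmul_fun /= /lscale_fun apZ. Qed.
HB.instance Definition _ := GRing.Lalgebra_isAlgebra.Build R lend lscaleAr.

Lemma apE0 f x : (0 : lend) f x = 0. Proof. by []. Qed.
Lemma apED (F G : lend) f x : (F + G) f x = F f x + G f x. Proof. by []. Qed.
Lemma apEM (F G : lend) f x : (F * G) f x = F (G f) x. Proof. by []. Qed.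
Lemma apE1 f x : (1 : lend) f x = f x. Proof. by []. Qed.
Lemma apEZ k (F : lend) f x : (k *: F) f x = k * F f x. Proof. by []. Qed.
Lemma apEN (F : lend) f x : (- F) f x = - F f x. Proof. by []. Qed.

Lemma apE_sum (I : Type) (l : seq I) (F : I -> lend) f x :
  (\sum_(i <- l) F i) f x = \sum_(i <- l) F i f x.
Proof.
elim: l => [|i l IH]; first by rewrite !big_nil.
by rewrite !big_cons apED IH.
Qed.

End EndAlg.

Section Words.
Local Open Scope classical_set_scope.
Variables (V Ed Alph : Type) (src rng : Ed -> V) (lab : Ed -> Alph).
Local Notation rs := (rset src rng lab).
Local Notation lk := (linked src rng).

Lemma linked_cat e0 l1 e1 l2 :
  lk e0 (l1 ++ e1 :: l2) <-> [/\ lk e0 l1, rng (last e0 l1) = src e1 & lk e1 l2].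
Proof.
elim: l1 e0 => [|e l1 IH] e0 /=; first by split => [[]|[]].
split.
- by move=> [H1 /IH [H2 H3 H4]].
- by move=> [[H1 H2] H3 H4]; split => //; apply/IH.
Qed.

Lemma take_cat_eq (T : Type) (s1 s2 t1 t2 : seq T) :
  s1 ++ s2 = t1 ++ t2 -> size s1 = size t1 -> s1 = t1 /\ s2 = t2.
Proof.
move=> E S; split.
- by have := congr1 (take (size s1)) E; rewrite take_size_cat // S take_size_cat.
- by have := congr1 (drop (size s1)) E; rewrite drop_size_cat // S drop_size_cat.
Qed.

Lemma rsetC (A : set V) u v : rs (rs A u) v = rs A (u ++ v).
Proof.
case: u => [|a u] //; case: v => [|b v]; first by rewrite cats0.
rewrite /=; apply/seteqP; split => x /=.
- move=> [f0 [l2 [Hl2 [Hm2 [[e0 [l1 [Hl1 [Hm1 [HA He]]]]] Hx]]]]].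
  exists e0, (l1 ++ f0 :: l2); split; first by apply/linked_cat.
  split.
    by rewrite /= map_cat /=; case: Hm1 => -> ->; case: Hm2 => -> ->.
  by split => //; rewrite last_cat.
- move=> [e0 [l [Hl [Hm [HA Hx]]]]].
  have Hs : size l = size u + (size v).+1.
    by have := congr1 size Hm; rewrite /= size_map size_cat /= => -[].
  have : drop (size u) l <> [::].
    by move=> D; have := size_drop (size u) l; rewrite D Hs /=; lia.
  case ED : (drop (size u) l) => [//|f0 l2] _.
  have El : l = take (size u) l ++ f0 :: l2 by rewrite -ED cat_take_drop.
  rewrite El in Hl Hm Hx.
  move: Hl => /linked_cat [H1 H2 H3].
  have [M1 M2] : map lab (e0 :: take (size u) l) = a :: u /\ map lab (f0 :: l2) = b :: v.
    apply: take_cat_eq; first by rewrite -map_cat.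
    by rewrite /= size_map size_take Hs; case: ltnP => //; lia.
  exists f0, l2; split => //; split => //; split; last by rewrite last_cat in Hx.
  by exists e0, (take (size u) l).
Qed.

Lemma rset_mono (A C : set V) w : A `<=` C -> rs A w `<=` rs C w.
Proof.
case: w => [//|a w] H x /= [e0 [l [H1 [H2 [H3 H4]]]]].
by exists e0, l; split => //; split => //; split => //; apply: H.
Qed.

Lemma rset0 w : rs set0 w = set0.
Proof. by case: w => [//|a w]; apply/seteqP; split => x //= [e0 [l [_ [_ [[] _]]]]]. Qed.

Lemma rsetU (A C : set V) w : rs (A `|` C) w = rs A w `|` rs C w.
Proof.
case: w => [//|a w]; apply/seteqP; split => x /=.
- move=> [e0 [l [H1 [H2 [[H3|H3] H4]]]]]; [left|right]; by exists e0, l.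
- by move=> [] [e0 [l [H1 [H2 [H3 H4]]]]]; exists e0, l; split => //; split => //;
    split => //; [left|right].
Qed.

Lemma rset_Lstar (A : set V) w x : rs A w x -> in_Lstar src rng lab w.
Proof.
case: w => [_|a w]; first by left.
move=> /= [e0 [l [H1 [H2 _]]]]; right; by exists e0, l.
Qed.

Lemma rset_nLstar (A : set V) w : ~ in_Lstar src rng lab w -> rs A w = set0.
Proof. move=> H; apply/seteqP; split => x // /rset_Lstar; exact: H. Qed.

Variable B : set (set V).
Hypothesis surj : forall a : Alph, exists e : Ed, lab e = a.
Hypothesis nls : normal_labelled_space src rng lab B.

Lemma B0 (A : set V) : B A -> B set0.
Proof. case: nls => _ _ Hd HA; by rewrite -(setDv A); apply: Hd. Qed.

Lemma BI (A C : set V) : B A -> B C -> B (A `&` C).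
Proof. by case: nls => -[H _ _ _] _ _; apply: H. Qed.

Lemma BD (A C : set V) : B A -> B C -> B (A `\` C).
Proof. by case: nls => _ _ H; apply: H. Qed.

Lemma B_rset (A : set V) w : B A -> B (rs A w).
Proof.
move=> HA; have [Hw|Hw] := pselect (in_Lstar src rng lab w).
  by case: nls => -[_ _ _ H] _ _; apply: H.
by rewrite rset_nLstar //; apply: B0 HA.
Qed.

Lemma rsetI (A C : set V) w : B A -> B C -> rs (A `&` C) w = rs A w `&` rs C w.
Proof.
move=> HA HC; case: w => [//|a w].
have [Hw|Hw] := pselect (in_Lstar src rng lab (a :: w)).
  by case: nls => _ H _; apply: H.
by rewrite !rset_nLstar // setI0.
Qed.

Lemma Lstar1 a : in_Lstar src rng lab [:: a].
Proof. by have [e He] := surj a; right; exists e, [::]; rewrite /= He. Qed.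

Lemma B_rword (A : set V) w : B A -> B (rword src rng lab w) \/ w = [::].
Proof.
move=> HA; case: w => [|a w]; first by right.
left; have [Hw|Hw] := pselect (in_Lstar src rng lab (a :: w)).
  by case: nls => -[_ _ H _] _ _; apply: H.
by rewrite /rword rset_nLstar //; apply: B0 HA.
Qed.

End Words.

Section Rep.
Local Open Scope classical_set_scope.
Local Open Scope ring_scope.
Variables (V Ed Alph : Type) (src rng : Ed -> V) (lab : Ed -> Alph).
Variable B : set (set V).
Variable R : comNzRingType.
Hypothesis surj : forall a : Alph, exists e : Ed, lab e = a.
Hypothesis nls : normal_labelled_space src rng lab B.
Local Notation rs := (rset src rng lab).
Local Notation rw := (rword src rng lab).

Arguments rset : simpl never.
Arguments rword : simpl never.

Definition Raw := ((nat -> option Alph) * (nat -> set V -> bool))%type.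

Definition lhom (chi : set V -> bool) :=
  (forall C D, B C -> B D -> chi (C `&` D) = chi C && chi D /\ chi (C `|` D) = chi C || chi D)
  /\ chi set0 = false.

Definition valid (x : Raw) : Prop :=
  [/\ forall n a, x.1 n = Some a -> x.2 n = (fun C => x.2 n.+1 (rs C [:: a])),
      forall n, lhom (x.2 n),
      forall n, x.1 n = None -> forall A, regular src rng lab B A -> x.2 n A = false
    & forall n a, x.1 n = Some a -> x.2 n.+1 (rw [:: a]) = true ].

Definition vb x := `[< valid x >].
Definition tl (x : Raw) : Raw := (fun n => x.1 n.+1, fun n => x.2 n.+1).
Definition cs a (x : Raw) : Raw :=
  (fun n => if n is n'.+1 then x.1 n' else Some a,
   fun n => if n is n'.+1 then x.2 n' else (fun C => x.2 0%N (rs C [:: a]))).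

Lemma valid_tl x : valid x -> valid (tl x).
Proof. by case=> H1 H2 H3 H4; split => [n a|n|n|n a]; [apply: H1|apply: H2|apply: H3|apply: H4]. Qed.

Lemma lhom_mono chi C D : lhom chi -> B C -> B D -> C `<=` D -> chi C -> chi D.
Proof.
move=> [H _] HC HD CD HCt; have [E _] := H C D HC HD.
by rewrite setIidl // HCt in E.
Qed.

Lemma lhom_r chi w : lhom chi -> lhom (fun C => chi (rs C w)).
Proof.
move=> [H H0]; split; last by rewrite rset0.
move=> C D HC HD; rewrite (rsetI nls) // rsetU.
by apply: H; apply: (B_rset nls).
Qed.

Lemma valid_cs a x : valid x -> x.2 0%N (rw [:: a]) -> valid (cs a x).
Proof.
case=> H1 H2 H3 H4 Ha; split.
- by case => [|n] b /= E; [case: E => <-|apply: H1].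
- case => [|n]; last exact: H2.
  exact: lhom_r.
- by case => [|n] //= E; apply: H3.
- by case => [|n] b /= E; [case: E => <-|apply: H4].
Qed.

Lemma tl_cs a x : tl (cs a x) = x.
Proof. by case: x. Qed.

Lemma cs_tl a x : valid x -> x.1 0%N = Some a -> cs a (tl x) = x.
Proof.
case: x => x1 x2 [H1 _ _ _] /= E; congr pair; apply: funext; case => [|n] //=.
by move: (H1 0%N a E) => /= ->.
Qed.

Definition wfun (c : Raw -> bool) (phi : Raw -> Raw) (f : Raw -> R) :=
  fun x => (c x)%:R * f (phi x).
Lemma wfun_lin c phi : islin (wfun c phi).
Proof. by move=> k f g; apply: funext => x; rewrite /wfun mulrDr mulrCA. Qed.
Definition raw0 : Raw := (fun _ => None, fun _ _ => false).
Definition wop c phi : lendt R raw0 := Lend raw0 (wfun_lin c phi).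

Definition Pop (A : set V) := wop (fun x => vb x && x.2 0%N A) id.
Definition Sop (a : Alph) := wop (fun x => vb x && `[< x.1 0%N = Some a >]) tl.
Definition SSop (a : Alph) := wop (fun x => vb x && x.2 0%N (rw [:: a])) (cs a).

Lemma wopE c phi f x : wop c phi f x = (c x)%:R * f (phi x).
Proof. by []. Qed.

Lemma sum_single (l : seq Alph) (F : Alph -> R) b :
  List.NoDup l -> (forall a, a <> b -> F a = 0) ->
  \sum_(a <- l) F a = if `[< List.In b l >] then F b else 0.
Proof.
move=> ND HF; elim: l ND => [|a l IH] ND; first by rewrite big_nil asboolF.
move: ND => /List.NoDup_cons_iff [Hn ND]; rewrite big_cons IH //.
have [<-|ab] := pselect (a = b).
  by rewrite (asboolF Hn) addr0 asboolT //; left.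
rewrite HF // add0r; congr (if _ then _ else _).
by apply/asboolP/asboolP => [H|[E|H]] //; right.
Qed.

Ltac unf := do 3 (simpl; try unfold ladd_fun; try unfold lopp_fun; try unfold lmul_fun;
  try unfold lscale_fun; try unfold lzero_fun; try unfold lone_fun; try unfold wfun); simpl.

Lemma rep : LLPA_rep src rng lab B Pop Sop SSop.
Proof.
split.
- move=> A C HA HC; split; apply: lend_eq => f x; unf; rewrite /vb;
    (case: (pselect (valid x)) => Hv; last by rewrite (asboolF Hv) /= ?mulr0n !mul0r ?addr0 ?subr0);
    rewrite (asboolT Hv) /=; case: Hv => _ H2 _ _; have [H _] := H2 0%N;
    rewrite ?(proj1 (H A C HA HC)) ?(proj2 (H A C HA HC));
    by case: (x.2 0%N A); case: (x.2 0%N C); rewrite /= ?mulr1n ?mulr0n ?mul0r ?mul1r ?subrr ?addr0 ?add0r ?subr0 ?addrK ?oppr0.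
- split.
    apply: lend_eq => f x; unf; rewrite /vb.
    case: (pselect (valid x)) => Hv; rewrite ?(asboolT Hv) ?(asboolF Hv) /= ?mul0r //.
    by case: Hv => _ H2 _ _; case: (H2 0%N) => _ ->; rewrite mul0r.
  move=> A a HA; split; apply: lend_eq => f x; unf; rewrite /vb.
  + case: (pselect (valid x)) => Hv; rewrite ?(asboolT Hv) ?(asboolF Hv) /= ?mul0r //.
    case: (pselect (x.1 0%N = Some a)) => Ha; rewrite ?(asboolT Ha) ?(asboolF Ha) /= ?mul0r ?mulr0 //.
    rewrite (asboolT (valid_tl Hv)) /=.
    by case: Hv => H1 _ _ _; rewrite (H1 0%N a Ha) /= !mul1r.
  + case: (pselect (valid x)) => Hv; rewrite ?(asboolT Hv) ?(asboolF Hv) /= ?mul0r //.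
    case E : (x.2 0%N (rw [:: a])); rewrite /= ?mul0r ?mulr0 //.
    rewrite (asboolT (valid_cs Hv (E : is_true _))) /= mul1r.
    by case: (x.2 0%N (rs A [:: a])); rewrite /= ?mul1r ?mul0r.
- move=> a b; split.
    apply: lend_eq => f x; unf; rewrite /vb.
    case: (pselect (valid x)) => Hv; rewrite ?(asboolT Hv) ?(asboolF Hv) /= ?mul0r //.
    case E : (x.2 0%N (rw [:: a])); rewrite /= ?mul0r ?mulr0 //.
    rewrite (asboolT (valid_cs Hv (E : is_true _))) /= asboolT // mul1r mul1r.
    by rewrite tl_cs ?mulr1n ?mul1r.
  move=> ba; apply: lend_eq => f x; unf; rewrite /vb.
  case: (pselect (valid x)) => Hv; rewrite ?(asboolT Hv) ?(asboolF Hv) /= ?mul0r //.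
  case E : (x.2 0%N (rw [:: b])); rewrite /= ?mul0r ?mulr0 //.
  by rewrite (@asboolF (Some b = Some a)) ?andbF ?mulr0n ?mul0r ?mulr0 // => -[/ba].
- move=> a; split; apply: lend_eq => f x; unf; rewrite /vb.
  + case: (pselect (valid x)) => Hv; rewrite ?(asboolT Hv) ?(asboolF Hv) /= ?mul0r //.
    case: (pselect (x.1 0%N = Some a)) => Ha; rewrite ?(asboolT Ha) ?(asboolF Ha) /= ?mul0r ?mulr0 //.
    have Hv' := valid_tl Hv.
    rewrite (asboolT Hv') /=.
    have E : x.2 1%N (rw [:: a]) by case: Hv => _ _ _ H4; apply: H4 Ha.
    rewrite E /= (asboolT (valid_cs Hv' E)) /= asboolT // ?mulr1n !mul1r.
    by rewrite tl_cs.
  + case: (pselect (valid x)) => Hv; rewrite ?(asboolT Hv) ?(asboolF Hv) /= ?mul0r //.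
    case E : (x.2 0%N (rw [:: a])); rewrite /= ?mul0r ?mulr0 //.
    rewrite (asboolT (valid_cs Hv (E : is_true _))) /= asboolT // ?mulr1n !mul1r.
    by [].
- move=> A HA l ND Hl; apply: lend_eq => f x.
  rewrite apE_sum /= /wfun /vb.
  case: (pselect (valid x)) => Hv; rewrite ?(asboolT Hv) ?(asboolF Hv) /= ?mul0r.
  + case E1 : (x.1 0%N) => [b|].
    * rewrite (@sum_single l _ b ND); last first.
        by move=> a ab; rewrite asboolF ?mulr0n ?mul0r // => -[E]; apply: ab; rewrite E.
      rewrite (@asboolT (Some b = Some b)) // ?mulr1n ?mul1r.
      have Hv' := valid_tl Hv.
      have E : x.2 1%N (rw [:: b]) by case: Hv => _ _ _ H4; apply: H4 E1.
      rewrite (asboolT Hv') E /= ?mulr1n mul1r cs_tl //.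
      case: Hv => H1 H2 _ _.
      rewrite (H1 0%N b E1) /=.
      case: (pselect (List.In b l)) => Hin.
        by rewrite (asboolT Hin) ?mulr1n ?mul1r.
      rewrite (asboolF Hin).
      have E0 : rs A [:: b] = set0.
        have : ~ out_labels src rng lab A b by move/Hl.
        by rewrite /out_labels => /negP; rewrite negbK => /eqP.
      by rewrite E0; case: (H2 1%N) => _ ->; rewrite ?mulr0n mul0r.
    * rewrite big1 => [|a _]; last by rewrite /= /wfun asboolF ?andbF ?mul0r // E1.
      case: HA => [Hr|->].
        by case: Hv => _ _ H3 _; rewrite (H3 0%N E1 A Hr) ?mulr0n mul0r.
      by case: Hv => _ H2 _ _; case: (H2 0%N) => _ ->; rewrite ?mulr0n mul0r.
  + by rewrite big1 // => a _; rewrite ?mulr0n mul0r.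
Qed.

End Rep.

Arguments rset : simpl never.
Arguments rword : simpl never.

Section UF.
Local Open Scope classical_set_scope.
Variable U : set_system nat.
Hypothesis UU : UltraFilter U.
Hypothesis Ucof : forall N, U [set m | (N <= m)%N].

Lemma Ueq (X Y : set nat) N : (forall m, (N <= m)%N -> (X m <-> Y m)) -> U X -> U Y.
Proof.
move=> H UX; apply: (@filterS _ _ _ (X `&` [set m | (N <= m)%N])).
  by move=> m [Xm Nm]; apply/H.
by apply: filterI.
Qed.

Lemma UI (X Y : set nat) : U (X `&` Y) <-> U X /\ U Y.
Proof.
split; last by move=> [? ?]; apply: filterI.
by move=> H; split; apply: filterS H => m [].
Qed.

Lemma UUn (X Y : set nat) : U (X `|` Y) -> U X \/ U Y.
Proof.
move=> H; case: (in_ultra_setVsetC X UU) => [|HX]; first by left.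
right; apply: (@filterS _ _ _ (~` X `&` (X `|` Y))); last by apply: filterI.
by move=> m [nX [|]].
Qed.

Lemma U0 : ~ U set0.
Proof. exact: filter_not_empty. Qed.

End UF.

Section Points.
Local Open Scope classical_set_scope.
Variables (V Ed Alph : Type) (src rng : Ed -> V) (lab : Ed -> Alph).
Variable B : set (set V).
Hypothesis surj : forall a : Alph, exists e : Ed, lab e = a.
Hypothesis nls : normal_labelled_space src rng lab B.
Local Notation rs := (rset src rng lab).
Local Notation rw := (rword src rng lab).
Local Notation valid := (valid src rng lab B).

Lemma nth_drop (beta : seq Alph) n a :
  nth None (map Some beta) n = Some a -> drop n beta = a :: drop n.+1 beta.
Proof.
elim: beta n => [|b beta IH] [|n] //=.
- by case=> ->; rewrite drop0.
- by move=> /IH.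
Qed.

Lemma nth_drop0 (beta : seq Alph) n :
  nth None (map Some beta) n = None -> drop n beta = [::].
Proof. by elim: beta n => [|b beta IH] [|n] //=; exact: IH. Qed.

Lemma lhom_at (v : V) w : lhom B (fun C => `[< rs C w v >]).
Proof.
split; last by rewrite rset0 asboolF.
move=> C D HC HD; rewrite (rsetI nls) // rsetU; split.
  exact: asbool_and.
exact: asbool_or.
Qed.

Lemma fin_point (A : set V) beta v :
  rs A beta v -> (forall D, regular src rng lab B D -> ~ D v) ->
  exists x, valid x /\ x.2 0%N A.
Proof.
move=> Hv Hreg.
exists (fun n => nth None (map Some beta) n, fun n C => `[< rs C (drop n beta) v >]).
split; last by rewrite /= drop0; exact/asboolP.
split => /=.
- move=> n a /nth_drop E; apply: funext => C.
  by rewrite E rsetC.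
- move=> n; exact: lhom_at.
- move=> n /nth_drop0 -> D HD; apply: asboolF; exact: Hreg.
- move=> n a /nth_drop E; apply/asboolP.
  rewrite /rword rsetC /= -E.
  have : rs (rs A (take n beta)) (drop n beta) v by rewrite rsetC cat_take_drop.
  by apply: rset_mono.
Qed.

Fixpoint wseq (nx : seq Alph -> Alph) n : seq Alph :=
  if n is n'.+1 then rcons (wseq nx n') (nx (wseq nx n')) else [::].

Definition seg (f : nat -> Alph) n m := map f (iota n (m - n)).

Lemma wseqE nx n : wseq nx n = map (fun i => nx (wseq nx i)) (iota 0 n).
Proof.
elim: n => [//|n IH].
transitivity (rcons (wseq nx n) (nx (wseq nx n))); first by [].
by rewrite -addn1 iotaD map_cat -cats1 {1}IH.
Qed.

Lemma seg_cat (f : nat -> Alph) n m : (n <= m)%N ->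
  map f (iota 0 m) = map f (iota 0 n) ++ seg f n m.
Proof. by move=> H; rewrite /seg -map_cat; congr map; rewrite -{1}(subnKC H) iotaD. Qed.

Lemma seg_cons (f : nat -> Alph) n m : (n < m)%N -> seg f n m = f n :: seg f n.+1 m.
Proof.
move=> H; rewrite /seg; case E: (m - n)%N => [|k]; first by lia.
by rewrite /= (_ : (m - n.+1 = k)%N) //; lia.
Qed.

Lemma seg0 (f : nat -> Alph) m : seg f 0 m = map f (iota 0 m).
Proof. by rewrite /seg subn0. Qed.

Lemma exists_point (A : set V) : B A -> A !=set0 -> exists x, valid x /\ x.2 0%N A.
Proof.
move=> HA [v0 Av0].
case: (pselect (exists beta v, rs A beta v /\ forall D, regular src rng lab B D -> ~ D v))
  => [[beta [v [H1 H2]]]|Hno].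
  exact: fin_point H1 H2.
have Hreg : forall beta v, rs A beta v -> exists D, regular src rng lab B D /\ D v.
  move=> beta v Hv; apply: contrapT => Hn; apply: Hno; exists beta, v; split => // D HD Dv.
  by apply: Hn; exists D.
have step : forall beta, rs A beta !=set0 -> exists a, rs A (rcons beta a) !=set0.
  move=> beta [v Hv]; have [D [HD Dv]] := Hreg _ _ Hv.
  case: (HD) => HDB _ HDo.
  have HC : B (rs A beta `&` D) by apply: (BI nls) => //; apply: (B_rset nls).
  have HCne : rs A beta `&` D != set0 by apply/set0P; exists v.
  have [/set0P [a Ha] _] := HDo _ HC HCne (@subIsetr _ _ _).
  move: Ha; rewrite /out_labels => /set0P [u Hu].
  exists a, u; rewrite -cats1 -rsetC; apply: rset_mono Hu; exact: subIsetl.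
have [a0 _] := step [::] (ex_intro _ v0 Av0).
have : forall beta, exists a, rs A beta !=set0 -> rs A (rcons beta a) !=set0.
  move=> beta; case: (pselect (rs A beta !=set0)) => H.
    by have [a Ha] := step _ H; exists a.
  by exists a0.
move=> /choice [nx Hnx].
have wne : forall n, rs A (wseq nx n) !=set0.
  by elim => [|n IH] /=; [exists v0|apply: Hnx].
have /choice [u Hu] : forall n, exists v, rs A (wseq nx n) v.
  by move=> n; have [v Hv] := wne n; exists v.
have [U [UU sub]] := ultraFilterLemma eventually_filter.
have Ucof : forall N, U [set m | (N <= m)%N].
  by move=> N; apply: sub; exists N.
pose l := fun i => nx (wseq nx i).
have wE : forall n m, (n <= m)%N -> wseq nx m = wseq nx n ++ seg l n m.
  by move=> n m H; rewrite !wseqE; apply: seg_cat.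
exists (fun n => Some (l n),
        fun n C => `[< U [set m | (n <= m)%N /\ rs C (seg l n m) (u m)] >]).
split; last first.
  apply/asboolP => /=; apply: filterS (Ucof 0%N) => m _; split => //.
  by rewrite seg0 -wseqE.
split => /=.
- move=> n a [<-]; apply: funext => C; apply: asbool_equiv_eq.
  by split; apply: (Ueq UU Ucof (N := n.+1)) => m Hm /=;
    rewrite (seg_cons l Hm) rsetC; split => -[_ H]; split => //; lia.

- move=> n; split; last first.
    apply: asboolF => /= H; apply: (U0 UU).
    by apply: filterS H => m [_]; rewrite rset0.
  move=> C D HC HD; split.
  + rewrite -asbool_and; apply: asbool_equiv_eq; rewrite -(UI UU).
    split => H; apply: filterS H => m /=.
      by move=> [Hm]; rewrite (rsetI nls) // => -[H1 H2]; split.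
    by move=> [[Hm H1] [_ H2]]; split => //; rewrite (rsetI nls).
  + rewrite -asbool_or; apply: asbool_equiv_eq; split.
      move=> H; apply: (UUn UU); apply: filterS H => m /= [Hm].
      by rewrite rsetU => -[H1|H1]; [left|right].
    by case=> H; apply: filterS H => m /= [Hm H1]; split => //; rewrite rsetU; [left|right].
- by [].
- move=> n a [<-]; apply/asboolP; apply: filterS (Ucof n.+1) => m Hm; split => //.
  have := Hu m; rewrite (wE n.+1 m Hm) /= -rsetC.
  rewrite (_ : rcons (wseq nx n) (nx (wseq nx n)) = wseq nx n ++ [:: l n]); last by rewrite cats1.
  rewrite -rsetC; apply: rset_mono; apply: rset_mono => // y _.
Qed.

End Points.

Section Main.
Local Open Scope classical_set_scope.
Local Open Scope ring_scope.
Variables (V Ed Alph : Type) (src rng : Ed -> V) (lab : Ed -> Alph).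
Variable B : set (set V).
Variable R : comNzRingType.
Hypothesis surj : forall a : Alph, exists e : Ed, lab e = a.
Hypothesis nls : normal_labelled_space src rng lab B.
Local Notation rs := (rset src rng lab).
Local Notation rw := (rword src rng lab).

Lemma eval_P (x : Raw V Alph) (A : set V) r :
  valid src rng lab B x -> x.2 0%N A ->
  (r *: Pop src rng lab B R A) (fun _ => 1) x = r.
Proof.
move=> Hv HA; rewrite /= /lscale_fun /= /wfun /vb (asboolT Hv) HA /=.
by rewrite mulr1n !mulr1.
Qed.

Lemma key (A : set V) (r : R) : B A -> A != set0 ->
  @LLPA_eq0 V Ed Alph src rng lab R B (fun X p s ss => r *: p A) -> r = 0.
Proof.
move=> HA /set0P HA0 H.
have [x [Hv Hx]] := exists_point nls HA HA0.
have := H _ _ _ _ (rep R nls).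
move=> /(congr1 (fun F : lendt R (raw0 V Alph) => F (fun _ => 1) x)).
by rewrite eval_P.
Qed.

Lemma ss_s (X : algType R) p s ss (A0 : set V) :
  LLPA_rep src rng lab B p s ss -> B A0 ->
  forall al, s_word_star ss al * s_word s al = (if al is [::] then (1 : X) else p (rw al)).
Proof.
move=> Hrep HA0; destruct Hrep as [H1 [H20 H2] H3 H4 H5].
elim/last_ind => [|al a IH].
  by rewrite /s_word_star /s_word /= !big_nil mulr1.
have -> : (match rcons al a with [::] => (1 : X) | _ :: _ => p (rw (rcons al a)) end) = p (rw (rcons al a)).
  by case: al {IH}.
rewrite /s_word_star /s_word rev_rcons big_cons big_rcons /=.
rewrite -mulrA (mulrA _ (\prod_(_ <- al) s _)).
move: IH; rewrite /s_word_star /s_word => ->.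
case: al => [|b al].
  by rewrite mul1r; case: (H3 a a).
have Hb : B (rw (b :: al)) by case: (B_rword nls (b :: al) HA0).
have Ha : B (rw [:: a]) by case: (B_rword nls [:: a] HA0).
rewrite mulrA; have [_ ->] := H2 _ a Hb.
rewrite -mulrA; case: (H3 a a) => -> _.
have Hr : B (rs (rw (b :: al)) [:: a]) by apply: (B_rset nls).
have [<- _] := H1 _ _ Hr Ha.
congr p; rewrite setIidl; last by apply: rset_mono.
by rewrite /rword rsetC cats1.
Qed.

End Main.

Arguments rset : simpl never.
Arguments rword : simpl never.

Local Open Scope classical_set_scope.
Local Open Scope ring_scope.

Theorem lemma4p5 (V Ed Alph : Type) (src rng : Ed -> V) (lab : Ed -> Alph)
    (B : set (set V)) (R : comNzRingType) :
  (forall a : Alph, exists e : Ed, lab e = a) ->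
  normal_labelled_space src rng lab B ->
  [/\
   (* (i) *)
   (forall A, B A -> A != set0 ->
      ~ @LLPA_eq0 V Ed Alph src rng lab R B (fun X p s ss => p A)),
   (* (ii) *)
   (forall (r : R) A, B A ->
      @LLPA_eq0 V Ed Alph src rng lab R B (fun X p s ss => r *: p A) -> r = 0 \/ A = set0),
   (* (iii) *)
   (forall (n : nat) (A : 'I_n -> set V) (c : 'I_n -> R),
      (forall i, B (A i)) -> (forall i, A i != set0) ->
      (forall i j, i != j -> A i `&` A j = set0) ->
      @LLPA_eq0 V Ed Alph src rng lab R B (fun X p s ss => \sum_(i < n) c i *: p (A i)) ->
      forall i, c i = 0)
   &
   (* (iv) *)
   (forall (alpha beta : seq Alph) A (r : R),
      in_Lstar src rng lab alpha -> in_Lstar src rng lab beta -> B A ->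
      A `&` rword src rng lab alpha `&` rword src rng lab beta != set0 ->
      r != 0 ->
      ~ @LLPA_eq0 V Ed Alph src rng lab R B
          (fun X p s ss => r *: (s_word s alpha * p A * s_word_star ss beta)))].
Proof.
move=> surj nls; split.
- move=> A HA HA0 H.
  have : (1 : R) = 0.
    apply: (key nls HA HA0) => X p s ss Hr; by move: (H X p s ss Hr) => /= ->; rewrite scaler0.
  by move/eqP; rewrite oner_eq0.
- move=> r A HA H; case: (pselect (A = set0)) => [->|HA0]; [by right|left].
  by apply: (key nls HA _ H); apply/eqP.
- move=> n A c HB Hne Hdis H i.
  have [x [Hv Hx]] := exists_point nls (HB i) ((set0P _).1 (Hne i)).
  have := H _ _ _ _ (rep R nls) => /(congr1 (fun F : lendt R (raw0 V Alph) => F (fun _ => 1) x)).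
  rewrite apE_sum (bigD1 i) // big1 => [|j ji].
    by rewrite eval_P //= /lzero_fun addr0.
  have Hj : x.2 0%N (A j) = false.
    case: Hv => _ H2 _ _; have [H0 H00] := H2 0%N.
    have [E _] := H0 _ _ (HB i) (HB j).
    by move: E; rewrite Hdis 1?eq_sym // H00 Hx.
  by rewrite /= /lscale_fun /= /wfun Hj andbF mulr0n mul0r mulr0.
- move=> al be A r Hal Hbe HA Hne Hr H.
  have Hrw : forall w, B (rword src rng lab w) \/ w = [::].
    by move=> w; apply: (B_rword nls w HA).
  have rw0 : rword src rng lab [::] = setT by [].
  have HD : B (A `&` rword src rng lab al `&` rword src rng lab be).
    case: (Hrw al) => [Ha|->]; case: (Hrw be) => [Hb|->]; rewrite ?rw0 ?setIT //;
      by repeat apply: (BI nls).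
  apply: (negP Hr); apply/eqP; apply: (key nls HD Hne).
  move=> X p s ss Hrep.
  have := congr1 (fun y => s_word_star ss al * y * s_word s be) (H X p s ss Hrep).
  rewrite /= mulr0 mul0r => <-.
  rewrite -scalerAr -scalerAl; congr (r *: _).
  have -> : s_word_star ss al * (s_word s al * p A * s_word_star ss be) * s_word s be
     = (s_word_star ss al * s_word s al) * p A * (s_word_star ss be * s_word s be).
    by rewrite !mulrA.
  rewrite (ss_s nls Hrep HA) (ss_s nls Hrep HA).
  have H1 := Hrep; destruct H1 as [H1 _ _ _ _].
  clear H; case: al Hal Hne HD => [|a al] Hal Hne HD; case: be Hbe Hne HD => [|b be] Hbe Hne HD.
  + by rewrite rw0 !setIT mul1r mulr1.
  + rewrite rw0 setIT mul1r; have [Hb|//] := Hrw (b :: be).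
    by case: (H1 _ _ HA Hb).
  + rewrite rw0 setIT mulr1; have [Ha|//] := Hrw (a :: al).
    by rewrite setIC; case: (H1 _ _ Ha HA).
  + have [Ha|//] := Hrw (a :: al); have [Hb|//] := Hrw (b :: be).
    case: (H1 _ _ Ha HA) => <- _; rewrite (setIC (rword _ _ _ _) A).
    by case: (H1 _ _ (BI nls HA Ha) Hb) => <- _.
Qed.
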